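(* Let $m\in\mathbb{N}$, let $f_1,\dots,f_m\in C[0,1]$, and let $\mathcal{R}'$ be the ring of functions $x\mapsto p(f_1(x),\dots,f_m(x))$ where $p$ ranges over polynomials in $m$ variables with real coefficients. Then for every $r'\in\mathcal{R}'$, $$\overline{\dim}_B G(r')\le \max\{\overline{\dim}_B G(f_1),\dots,\overline{\dim}_B G(f_m)\}.$$
   Context: $C[0,1]$ is the space of real-valued continuous functions on $[0,1]$; $G(h)=\{(x,h(x)):x\in[0,1]\}\subset\mathbb{R}^2$ is the graph of $h$. For a nonempty bounded set $F$, $N_\delta(F)$ is the smallest number of sets of diameter at most $\delta$ covering $F$, and $\overline{\dim}_B F=\limsup_{\delta\to0}\frac{\log N_\delta(F)}{-\log\delta}$. *)

(* Defs.v *)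
From HB Require Import structures.
From mathcomp Require Import all_boot all_order all_algebra.
From mathcomp Require Import all_classical all_reals all_analysis.
From mathcomp Require mpoly.
Set Implicit Arguments. Unset Strict Implicit. Unset Printing Implicit Defensive.
Import Order.TTheory GRing.Theory Num.Theory.
Import numFieldNormedType.Exports.
Local Open Scope classical_set_scope.
Local Open Scope ring_scope.

Section BoxDim.
Variable R : realType.

Definition dist2 (p q : R * R) : R :=
  Num.sqrt ((p.1 - q.1) ^+ 2 + (p.2 - q.2) ^+ 2).

Definition diam_le (A : set (R * R)) (d : R) : Prop :=
  forall p q, A p -> A q -> dist2 p q <= d.

Definition coverable (F : set (R * R)) (d : R) (n : nat) : Prop :=
  exists A : nat -> set (R * R),
    (forall i, (i < n)%N -> diam_le (A i) d) /\
    (forall p, F p -> exists2 i, (i < n)%N & A i p).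

Definition Ndelta (F : set (R * R)) (d : R) : \bar R :=
  ereal_inf [set (n%:R)%:E | n in coverable F d].

Definition box_ratio (F : set (R * R)) (d : R) : \bar R :=
  match Ndelta F d with
  | EFin N => (ln N / (- ln d))%:E
  | +oo%E => +oo%E
  | -oo%E => -oo%E
  end.

Definition upper_box_dim (F : set (R * R)) : \bar R :=
  limf_esup (box_ratio F) (0%R^'+).

Definition graph (h : R -> R) : set (R * R) :=
  [set (x, h x) | x in `[0, 1]].

End BoxDim.

(* Main.v *)
Require Import Defs.
From HB Require Import structures.
From mathcomp Require Import all_boot all_order all_algebra.
From mathcomp Require Import all_classical all_reals all_analysis.
From mathcomp Require Import zify ring lra.
From mathcomp Require mpoly.
Import Order.TTheory GRing.Theory Num.Theory.
Import numFieldNormedType.Exports.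
Local Open Scope classical_set_scope.
Local Open Scope ring_scope.

Section Comb.
Variable R : realType.
Implicit Types (F : set (R * R)) (d : R).



Lemma cov_mono_n F d n n' : coverable F d n -> (n <= n')%N -> coverable F d n'.
Proof.
move=> [A [HA HF]] nn'.
exists (fun i => if (i < n)%N then A i else set0); split.
  move=> i _; case: ifP => [/HA //|_ p q []].
move=> p /HF [i ni Ai]; exists i; first exact: leq_trans nn'.
by rewrite ni.
Qed.

Lemma cov_sub F F' d n : F `<=` F' -> coverable F' d n -> coverable F d n.
Proof. by move=> FF [A [HA HF]]; exists A; split => // p /FF /HF. Qed.

Lemma cov_U F1 F2 d n1 n2 : coverable F1 d n1 -> coverable F2 d n2 ->
  coverable (F1 `|` F2) d (n1 + n2).
Proof.
move=> [A [HA HF]] [B [HB HG]].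
exists (fun i => if (i < n1)%N then A i else B (i - n1)%N); split.
  move=> i lti; case: ifP => [/HA //|/negbT]; rewrite -leqNgt => ni.
  by apply: HB; lia.
move=> p [/HF [i ni Ai]|/HG [i ni Bi]].
  by exists i; [lia| rewrite ni].
exists (i + n1)%N; first lia.
by rewrite ifF ?addnK //; lia.
Qed.

Lemma cov_bigU (P : nat -> set (R * R)) (c : nat -> nat) d J :
  (forall j, (j < J)%N -> coverable (P j) d (c j)) ->
  coverable [set z | exists2 j, (j < J)%N & P j z] d (\sum_(j < J) c j)%N.
Proof.
elim: J => [|J IH] H.
  rewrite big_ord0; exists (fun _ => set0); split => // p [j].
  by rewrite ltn0.
rewrite big_ord_recr /=.
apply: (@cov_sub _ ([set z | exists2 j, (j < J)%N & P j z] `|` P J)).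
  move=> z [j]; rewrite ltnS leq_eqVlt => /orP[/eqP->|jJ] Pz; first by right.
  by left; exists j.
apply: cov_U; last exact: H.
by apply: IH => j jJ; apply: H; lia.
Qed.

Lemma grid_lemma (lo e t : R) (N : nat) : 0 < e -> lo <= t <= lo + N%:R * e ->
  exists2 k, (k <= N)%N & lo + k%:R * e <= t <= lo + k.+1%:R * e.
Proof.
move=> e0; elim: N => [|N IH] /andP[h1 h2].
  by exists 0%N => //; rewrite mul0r addr0 h1 /= mul1r; lra.
have [tN|tN] := leP t (lo + N%:R * e).
  by have [//|k kN Hk] := IH; [rewrite h1 tN | exists k => //; lia].
exists N => //; rewrite (ltW tN) h2 //.
Qed.

Lemma sum_drop (sel : nat -> bool) i0 n : (i0 < n)%N -> sel i0 ->
  (\sum_(i < n) (sel i : nat) = (\sum_(i < n) ((sel i && ((i : nat) != i0)) : nat)).+1)%N.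
Proof.
elim: n => [//|n IH] i0n si0.
rewrite !big_ord_recr /=.
have [Hi|ne] := eqVneq i0 n.
  subst i0.
  rewrite si0 /= addn0 addn1; congr (_.+1).
  by apply: eq_bigr => i _; rewrite (ltn_eqF (ltn_ord i)) andbT.
rewrite IH //; last by rewrite ltn_neqAle ne -ltnS.
by rewrite /= andbT addSn.
Qed.
Arguments sum_drop [sel i0 n].

Lemma cover_len (δ : R) n (B : nat -> set R) : 0 <= δ ->
  forall k (sel : nat -> bool), (\sum_(i < n) (sel i : nat))%N = k ->
  (forall i u v, (i < n)%N -> sel i -> B i u -> B i v -> `|u - v| <= δ) ->
  forall a b, a <= b ->
  (forall t, a <= t <= b -> exists i, [/\ (i < n)%N, sel i & B i t]) ->
  b - a <= k%:R * δ.
Proof.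
move=> d0; elim=> [|k IH] sel Hk Hd a b ab Hc.
  have [|i [i_n si _]] := Hc a; first by rewrite lexx ab.
  by move: Hk; rewrite (sum_drop i_n si).
have [i0 [i0n si0 Bi0]] : exists i, [/\ (i < n)%N, sel i & B i a].
  by apply: Hc; rewrite lexx ab.
have Hk' : (\sum_(i < n) ((sel i && ((i : nat) != i0)) : nat))%N = k.
  by move: Hk; rewrite (sum_drop i0n si0) => -[].
have key : forall a', a + δ < a' <= b -> b - a' <= k%:R * δ.
  move=> a' /andP[h1 h2]; apply: (IH (fun i => sel i && ((i : nat) != i0)) Hk' _ a' b h2).
  - move=> i u v H1 /= H2; apply: Hd => //; by case/andP: H2.
  move=> t /andP[t1 t2].
  have [|i [i_n si Bi]] := Hc t; first by rewrite t2 andbT; lra.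
  exists i; split => //; rewrite si /=; apply/eqP => ii0; subst i.
  have := Hd _ _ _ i0n si0 Bi Bi0; rewrite ger0_norm; lra.
rewrite -natr1 mulrDl mul1r.
have k0 : 0 <= k%:R * δ by apply: mulr_ge0.
have [bad|//] := ltP (k%:R * δ + δ) (b - a).
set x := b - a - δ - k%:R * δ.
have := key (a + δ + x / 2); rewrite /x; lra.
Qed.

Lemma sum_window (lo hi J : nat) :
  (\sum_(j < J) (((lo <= j) && (j < hi))%N : nat) <= hi - lo)%N.
Proof.
suff -> : (\sum_(j < J) (((lo <= j) && (j < hi))%N : nat) = minn J hi - minn J lo)%N.
  lia.
elim: J => [|J IH]; first by rewrite big_ord0; lia.
rewrite big_ord_recr /= IH.
case: (leqP lo J) => h1; case: (ltnP J hi) => h2 /=; lia.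
Qed.


Lemma dist_ge1 (p q : R * R) : `|p.1 - q.1| <= dist2 p q.
Proof.
rewrite /dist2 -sqrtr_sqr; apply: ler_wsqrtr.
by rewrite lerDl sqr_ge0.
Qed.

Lemma dist_ge2 (p q : R * R) : `|p.2 - q.2| <= dist2 p q.
Proof.
rewrite /dist2 -sqrtr_sqr; apply: ler_wsqrtr.
by rewrite lerDr sqr_ge0.
Qed.

Lemma dist_le (p q : R * R) e : `|p.1 - q.1| <= e -> `|p.2 - q.2| <= e ->
  dist2 p q <= 2 * e.
Proof.
move=> h1 h2; have e0 : 0 <= e by apply: le_trans h1.
rewrite /dist2 -(ger0_norm (_ : 0 <= 2 * e)); last by rewrite mulr_ge0.
rewrite -sqrtr_sqr; apply: ler_wsqrtr.
rewrite -(real_normK (num_real (p.1 - q.1))) -(real_normK (num_real (p.2 - q.2))).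
have := normr_ge0 (p.1 - q.1); have := normr_ge0 (p.2 - q.2).
move: h1 h2; set a := `|_|; set b := `|_|; move=> h1 h2 hb ha.
rewrite !expr2; nra.
Qed.

Definition col (w : R) (j : nat) (x : R) := j%:R * w <= x <= j.+1%:R * w.

Lemma nat_le_of (a b : nat) (w : R) : 0 < w -> a%:R * w <= b%:R * w -> (a <= b)%N.
Proof. by move=> w0; rewrite ler_pM2r // ler_nat. Qed.

Lemma window (w : R) (h : R -> R) (A : set (R * R)) J : 0 < w -> diam_le A (2 * w) ->
  (\sum_(j < J) (`[< exists x, col w j x /\ A (x, h x) >] : nat) <= 7)%N.
Proof.
move=> w0 HA.
have close : forall j j0 x x0, col w j x -> A (x, h x) -> col w j0 x0 -> A (x0, h x0) ->
    (j <= j0 + 3)%N.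
  move=> j j0 x x0 /andP[c1 c2] Ax /andP[c3 c4] Ax0.
  have := HA _ _ Ax Ax0; have := dist_ge1 (x, h x) (x0, h x0) => /= d1 d2.
  apply: (@nat_le_of _ _ w w0).
  have d : x - x0 <= 2 * w := le_trans (ler_norm _) (le_trans d1 d2).
  rewrite natrD mulrDl; rewrite -natr1 mulrDl mul1r in c4.
  lra.
case: (pselect (exists j, (j < J)%N /\ exists x, col w j x /\ A (x, h x))).
  move=> [j0 [_ [x0 [c0 A0]]]].
  apply: (@leq_trans (\sum_(j < J) (((j0 - 3 <= j) && (j < j0 + 4))%N : nat))).
    apply: leq_sum => j _; case: asboolP => // -[x [cx Ax]].
    have := close _ _ _ _ cx Ax c0 A0; have := close _ _ _ _ c0 A0 cx Ax.
    move=> a b; have -> : ((j0 - 3 <= j) && (j < j0 + 4))%N = true.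
      by apply/andP; split; lia.
    by [].
  apply: leq_trans (sum_window _ _ _) _; lia.
move=> nex; rewrite big1 // => j _; case: asboolP => // hj.
by exfalso; apply: nex; exists j.
Qed.

Lemma col_var (h : R -> R) (hc : {within `[0, 1], continuous h}) (δ : R) n
  (A : nat -> set (R * R)) j x x' :
  0 < δ -> (forall k, (k < n)%N -> diam_le (A k) δ) ->
  (forall p, graph h p -> exists2 k, (k < n)%N & A k p) ->
  0 <= x <= 1 -> 0 <= x' <= 1 -> col (δ / 2) j x -> col (δ / 2) j x' ->
  `|h x - h x'| <= (\sum_(k < n)
     (`[< exists y : R, [/\ (0 <= y <= 1)%R, col (δ / 2) j y & A k (y, h y)] >] : nat))%:R * δ.
Proof.
move=> d0 HA HF.
wlog xx : x x' / x <= x'.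
  move=> H hx hx' cx cx'; case: (leP x x') => [le|/ltW le]; first exact: H.
  by rewrite distrC; exact: H.
move=> hx hx' cx cx'.
set sel := fun k => `[< exists y : R, [/\ (0 <= y <= 1)%R, col (δ / 2) j y & A k (y, h y)] >].
set B := fun k => [set t | exists y : R, [/\ 0 <= y <= 1, col (δ / 2) j y, A k (y, h y) & t = h y]].
have sub : `[x, x']%classic `<=` `[0, 1]%classic.
  move=> z /=; rewrite !in_itv /= => /andP[z1 z2]; apply/andP; split; lra.
have hc' := continuous_subspaceW sub hc.
have main : forall a b, a <= b -> (a = h x /\ b = h x') \/ (a = h x' /\ b = h x) ->
    b - a <= (\sum_(k < n) (sel k : nat))%:R * δ.
  move=> a b ab Hab.
  apply: (@cover_len δ n B (ltW d0) _ sel erefl) => //.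
    move=> k u v kn _ [y1 [_ _ A1 ->]] [y2 [_ _ A2 ->]].
    have := HA k kn _ _ A1 A2; have := dist_ge2 (y1, h y1) (y2, h y2) => /= e1 e2.
    exact: le_trans e1 e2.
  move=> t /andP[t1 t2].
  have tm : Num.min (h x) (h x') <= t <= Num.max (h x) (h x').
    by case: Hab => -[<- <-]; rewrite ge_min le_max t1 t2 ?orbT.
  have [c cin hct] := IVT xx hc' tm.
  move: cin; rewrite in_itv /= => /andP[c1 c2].
  have c01 : 0 <= c <= 1.
    by move: hx hx' => /andP[? ?] /andP[? ?]; apply/andP; split; lra.
  have ccol : col (δ / 2) j c.
    by move: cx cx' => /andP[? ?] /andP[? ?]; apply/andP; split; lra.
  have [k kn Ak] := HF (c, h c) (ex_intro2 _ _ c (c01 : `[0, 1]%classic c) erefl).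
  exists k; split => //.
    by apply/asboolP; exists c; split.
  by exists c; split.
case: (leP (h x) (h x')) => hh.
  by rewrite ler0_norm ?subr_le0 // opprB; apply: main => //; left; split.
by rewrite gtr0_norm ?subr_gt0 //; apply: main; [exact: ltW|right; split].
Qed.

Lemma col_cover (r : R -> R) w j lo (N : nat) : 0 < w ->
  (forall y, 0 <= y <= 1 -> col w j y -> lo <= r y <= lo + N%:R * w) ->
  coverable [set z | exists y : R, [/\ 0 <= y <= 1, col w j y & z = (y, r y)]] (2 * w) N.+1.
Proof.
move=> w0 H.
exists (fun k => [set z | col w j z.1 /\ lo + k%:R * w <= z.2 <= lo + k.+1%:R * w]); split.
  move=> k _ p q [/andP[p1 p2] /andP[p3 p4]] [/andP[q1 q2] /andP[q3 q4]].
  rewrite -natr1 mulrDl mul1r in p2 q2 p4 q4.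
  by apply: dist_le; rewrite ler_norml; apply/andP; split; lra.
move=> z [y [y01 cy ->]].
have [k kN hk] := grid_lemma lo w (r y) N w0 (H y y01 cy).
by exists k => //; split.
Qed.

Section Lip.
Variables (m : nat) (B : R).
Hypothesis B0 : 0 <= B.

Definition inbox (y : 'I_m -> R) := forall i, `|y i| <= B.

Definition lipB (φ : ('I_m -> R) -> R) := exists K : R, 0 <= K /\
  forall y z, inbox y -> inbox z -> `|φ y - φ z| <= K * \sum_i `|y i - z i|.

Lemma lip_ext φ ψ : (forall y, φ y = ψ y) -> lipB φ -> lipB ψ.
Proof. by move=> e [K [K0 H]]; exists K; split => // y z hy hz; rewrite -!e; apply: H. Qed.
Arguments lip_ext [φ ψ].

Lemma lip_bounded φ : lipB φ -> exists M, forall y, inbox y -> `|φ y| <= M.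
Proof.
move=> [K [K0 H]]; exists (`|φ (fun _ => 0)| + K * (m%:R * B)) => y hy.
have h0 : inbox (fun _ => 0) by move=> i; rewrite normr0.
have := H _ _ hy h0.
have : \sum_i `|y i - 0| <= m%:R * B.
  apply: le_trans (_ : \sum_(i < m) B <= _).
    by apply: ler_sum => i _; rewrite subr0.
  by rewrite sumr_const card_ord mulr_natl.
move=> hs hd.
have := ler_wpM2l K0 hs => hk.
have := lerB_dist (φ y) (φ (fun _ => 0)).
move: (normr_ge0 (φ y)); lra.
Qed.
Arguments lip_bounded [φ].

Lemma lip_const c : lipB (fun _ => c).
Proof. by exists 0; split => // y z _ _; rewrite subrr normr0 mul0r. Qed.

Lemma lip_proj i0 : lipB (fun y => y i0).
Proof.
exists 1; split => // y z _ _; rewrite mul1r (bigD1 i0) //= lerDl.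
by apply: sumr_ge0 => i _.
Qed.

Lemma lip_add φ ψ : lipB φ -> lipB ψ -> lipB (fun y => φ y + ψ y).
Proof.
move=> [K1 [K10 H1]] [K2 [K20 H2]]; exists (K1 + K2); split; first exact: addr_ge0.
move=> y z hy hz; have := H1 _ _ hy hz; have := H2 _ _ hy hz.
have := ler_normD (φ y - φ z) (ψ y - ψ z).
have -> : φ y - φ z + (ψ y - ψ z) = φ y + ψ y - (φ z + ψ z) by ring.
rewrite mulrDl; lra.
Qed.
Arguments lip_add [φ ψ].

Lemma lip_mul φ ψ : lipB φ -> lipB ψ -> lipB (fun y => φ y * ψ y).
Proof.
move=> hφ hψ; have [M1 hM1] := lip_bounded hφ; have [M2 hM2] := lip_bounded hψ.
move: hφ hψ => [K1 [K10 H1]] [K2 [K20 H2]].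
have h0 : inbox (fun _ => 0) by move=> i; rewrite normr0.
have M10 : 0 <= M1 by apply: le_trans (hM1 _ h0).
have M20 : 0 <= M2 by apply: le_trans (hM2 _ h0).
exists (M1 * K2 + M2 * K1); split; first by rewrite addr_ge0 // mulr_ge0.
move=> y z hy hz.
have -> : φ y * ψ y - φ z * ψ z = φ y * (ψ y - ψ z) + ψ z * (φ y - φ z) by ring.
apply: le_trans (ler_normD _ _) _; rewrite !normrM.
set S := \sum_i _.
have S0 : 0 <= S by apply: sumr_ge0.
have a1 := H1 _ _ hy hz; have a2 := H2 _ _ hy hz.
have b1 := hM1 _ hy; have b2 := hM2 _ hz.
have c1 : `|φ y| * `|ψ y - ψ z| <= M1 * (K2 * S).
  by apply: ler_pM => //; apply: normr_ge0.
have c2 : `|ψ z| * `|φ y - φ z| <= M2 * (K1 * S).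
  by apply: ler_pM => //; apply: normr_ge0.
have -> : (M1 * K2 + M2 * K1) * S = M1 * (K2 * S) + M2 * (K1 * S) by ring.
exact: lerD.
Qed.
Arguments lip_mul [φ ψ].

Lemma lip_sum (T : Type) (s : seq T) (F : T -> ('I_m -> R) -> R) :
  (forall t, lipB (F t)) -> lipB (fun y => \sum_(t <- s) F t y).
Proof.
move=> H; elim: s => [|t s IH].
  by apply: (lip_ext _ (lip_const 0)) => y; rewrite big_nil.
apply: (lip_ext _ (lip_add (H t) IH)) => y; by rewrite big_cons.
Qed.
Arguments lip_sum [T s F].

Lemma lip_prod (T : Type) (s : seq T) (F : T -> ('I_m -> R) -> R) :
  (forall t, lipB (F t)) -> lipB (fun y => \prod_(t <- s) F t y).
Proof.
move=> H; elim: s => [|t s IH].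
  by apply: (lip_ext _ (lip_const 1)) => y; rewrite big_nil.
apply: (lip_ext _ (lip_mul (H t) IH)) => y; by rewrite big_cons.
Qed.
Arguments lip_prod [T s F].

Lemma lip_pow i0 k : lipB (fun y => y i0 ^+ k).
Proof.
elim: k => [|k IH].
  by apply: (lip_ext _ (lip_const 1)) => y; rewrite expr0.
apply: (lip_ext _ (lip_mul (lip_proj i0) IH)) => y; by rewrite exprS.
Qed.

Lemma lip_meval (p : mpoly.mpoly m R) : lipB (fun y => mpoly.meval y p).
Proof.
apply: (lip_ext (fun y => esym (mpoly.mevalE y p))).
apply: lip_sum => mon.
apply: lip_mul; first exact: lip_const.
apply: lip_prod => i; exact: lip_pow.
Qed.

End Lip.

Lemma cov_set0 d : coverable (@set0 (R * R)) d 0.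
Proof. by exists (fun _ => set0); split => // p []. Qed.

Lemma count_main (m : nat) (hm : (0 < m)%N) (f : 'I_m -> R -> R)
  (hf : forall i, {within `[0, 1], continuous (f i)}) (r : R -> R) (K : nat)
  (hK : forall x x', 0 <= x <= 1 -> 0 <= x' <= 1 ->
     `|r x - r x'| <= K%:R * \sum_i `|f i x - f i x'|)
  (δ : R) (d0 : 0 < δ) (n : 'I_m -> nat)
  (hn : forall i, coverable (graph (f i)) δ (n i)) :
  coverable (graph r) δ (7 * (4 * K + 1) * \sum_i n i)%N.
Proof.
have [A HA] := choice hn.
pose w := δ / 2.
have w0 : 0 < w by rewrite /w divr_gt0.
have d2w : 2 * w = δ by rewrite /w; field.
pose J' := (Num.truncn (1 / w)).+1.
have hJ : 1 <= J'%:R * w.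
  have := truncnS_gt (1 / w); rewrite -/J' => h.
  by rewrite -ler_pdivrMr // ltW.
pose s i j := (\sum_(k < n i)
   (`[< exists y : R, [/\ (0 <= y <= 1)%R, col (δ / 2) j y & A i k (y, f i y)] >] : nat))%N.
pose S j := (\sum_i s i j)%N.
have var : forall i j x x', 0 <= x <= 1 -> 0 <= x' <= 1 -> col w j x -> col w j x' ->
    `|f i x - f i x'| <= (s i j)%:R * δ.
  move=> i j x x' h1 h2 h3 h4; have [HA1 HA2] := HA i.
  exact: (@col_var (f i) (hf i) δ (n i) (A i) j x x' d0 HA1 HA2 h1 h2 h3 h4).
have rvar : forall j x x', 0 <= x <= 1 -> 0 <= x' <= 1 -> col w j x -> col w j x' ->
    `|r x - r x'| <= (K * S j)%:R * δ.
  move=> j x x' h1 h2 h3 h4; apply: le_trans (hK _ _ h1 h2) _.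
  rewrite natrM -mulrA; apply: ler_wpM2l => //.
  rewrite /S natr_sum mulr_suml; apply: ler_sum => i _; exact: var.
have S1 : forall j y, 0 <= y <= 1 -> col w j y -> (1 <= S j)%N.
  move=> j y y01 cy; pose i0 := Ordinal hm.
  have [HA1 HA2] := HA i0.
  have [k kn Ak] := HA2 (y, f i0 y) (ex_intro2 _ _ y (y01 : `[0, 1]%classic y) erefl).
  apply: (@leq_trans (s i0 j)); last first.
    by rewrite /S (bigD1 i0) //= leq_addr.
  rewrite /s (bigD1 (Ordinal kn)) //=.
  case: asboolP => [_|]; first by rewrite add1n.
  by move=> nn; exfalso; apply: nn; exists y; split.
have colcov : forall j, (j < J'.+1)%N ->
    coverable [set z | exists y : R, [/\ 0 <= y <= 1, col w j y & z = (y, r y)]] δ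
      ((4 * K + 1) * S j)%N.
  move=> j _.
  case: (pselect (exists y : R, 0 <= y <= 1 /\ col w j y)); last first.
    move=> ne; apply: (@cov_sub _ set0); last by apply: cov_mono_n (cov_set0 _) _.
    by move=> z [y [y01 cy _]]; apply: ne; exists y.
  move=> [y0 [y01 cy0]].
  apply: (@cov_mono_n _ _ (4 * K * S j).+1); last first.
    have := S1 j y0 y01 cy0; lia.
  rewrite -d2w; apply: (@col_cover r w j (r y0 - (K * S j)%:R * δ) (4 * K * S j)) => // y y1 cy.
  have := rvar j y y0 y1 y01 cy cy0; rewrite ler_norml => /andP[e1 e2].
  have -> : (4 * K * S j)%:R * w = 2 * ((K * S j)%:R * δ).
    by rewrite -mulnA natrM /w; move: (K * S j)%:R => c; field.
  apply/andP; split; lra.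
apply: (@cov_sub _ [set z | exists2 j, (j < J'.+1)%N &
    [set z | exists y : R, [/\ 0 <= y <= 1, col w j y & z = (y, r y)]] z]).
  move=> z [x x01 <-]; move: x01 => /=; rewrite in_itv /= => x01.
  have [|j jJ hj] := grid_lemma 0 w x J' w0.
    by rewrite add0r; move: x01 => /andP[a b]; apply/andP; split; lra.
  exists j => //; exists x; split => //.
  by rewrite /col; rewrite !add0r in hj.
apply: (@cov_mono_n _ _ _ _ (@cov_bigU
  (fun j => [set z | exists y : R, [/\ 0 <= y <= 1, col w j y & z = (y, r y)]])
  (fun j => ((4 * K + 1) * S j)%N) δ J'.+1 colcov)).
rewrite -big_distrr /= (mulnC 7) -mulnA leq_mul2l; apply/orP; right.
rewrite /S exchange_big big_distrr /= leq_sum // => i _.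
rewrite /s exchange_big /=.
apply: (@leq_trans (\sum_(k < n i) 7)%N); last by rewrite sum_nat_const card_ord mulnC.
apply: leq_sum => k _.
have [HA1 _] := HA i.
have hd : diam_le (A i k) (2 * w) by rewrite d2w; exact: HA1.
apply: leq_trans (@window w (f i) (A i k) J'.+1 w0 hd).
apply: leq_sum => j _.
case: asboolP => // -[y [_ cy Ay]].
by case: asboolP => // nn; exfalso; apply: nn; exists y; split.
Qed.

Lemma Ndelta_min F d n : coverable F d n -> exists N, [/\ coverable F d N,
  (forall k, coverable F d k -> (N <= k)%N) & Ndelta F d = (N%:R)%:E].
Proof.
move=> cn.
have ex : exists k, `[< coverable F d k >] by exists n; apply/asboolP.
case: (ex_minnP ex) => N /asboolP cN minN.
exists N; split => //.
  by move=> k ck; apply: minN; apply/asboolP.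
apply/le_anti/andP; split.
  by apply: ereal_inf_lbound; exists N.
apply/ereal_infP => _ [k ck <-]; rewrite lee_fin ler_nat; apply: minN.
exact/asboolP.
Qed.

Lemma Ndelta_none F d : ~ (exists n, coverable F d n) -> Ndelta F d = +oo%E.
Proof.
move=> ne; apply/ereal_inf_pinfty => y [k ck _]; exfalso; apply: ne; by exists k.
Qed.

Lemma cov_graph_pos (h : R -> R) d N : coverable (graph h) d N -> (0 < N)%N.
Proof.
move=> [A [_ HF]].
have g0 : graph h (0, h 0).
  by exists 0 => //=; rewrite in_itv /= lexx ler01.
by have [k kN _] := HF _ g0; apply: leq_ltn_trans kN.
Qed.

Lemma ratio_bound (m : nat) (hm : (0 < m)%N) (f : 'I_m -> R -> R)
  (hf : forall i, {within `[0, 1], continuous (f i)}) (r : R -> R) (K : nat)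
  (hK : forall x x', 0 <= x <= 1 -> 0 <= x' <= 1 ->
     `|r x - r x'| <= K%:R * \sum_i `|f i x - f i x'|)
  (e η d : R) : 0 < d -> d < 1 -> 0 < η ->
  ln ((7 * (4 * K + 1) * m)%N%:R) <= η * (- ln d) ->
  (forall i, (box_ratio (graph (f i)) d < e%:E)%E) ->
  (box_ratio (graph r) d <= (e + η)%:E)%E.
Proof.
move=> d0 d1 η0 hX hi.
set L := - ln d.
have L0 : 0 < L by rewrite /L oppr_gt0; apply: ln_lt0; rewrite d0 d1.
have covi : forall i, exists n, coverable (graph (f i)) d n.
  move=> i; case: (pselect (exists n, coverable (graph (f i)) d n)) => // ne.
  by move: (hi i); rewrite /box_ratio Ndelta_none.
have HN0 : forall i, exists Nn, [/\ coverable (graph (f i)) d Nn,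
    (forall k, coverable (graph (f i)) d k -> (Nn <= k)%N) &
    Ndelta (graph (f i)) d = (Nn%:R)%:E].
  by move=> i; have [n cn] := covi i; exact: (@Ndelta_min _ _ n cn).
have [N HN] := choice HN0.
have Ni : forall i, [/\ coverable (graph (f i)) d (N i), (0 < N i)%N &
    ln (N i)%:R < e * L].
  move=> i; have [cN _ eN] := HN i; split => //; first exact: cov_graph_pos cN.
  move: (hi i); rewrite /box_ratio eN lte_fin => h.
  by rewrite -(ltr_pdivrMr _ _ L0).
have hcov := @count_main m hm f hf r K hK d d0 N (fun i => let: And3 c _ _ := Ni i in c).
have [Nr [cNr minr eNr]] := @Ndelta_min _ _ _ hcov.
have Nr0 := @cov_graph_pos _ _ _ cNr.
have Nrle := minr _ hcov.
rewrite /box_ratio eNr lee_fin ler_pdivrMr //.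
set C := (7 * (4 * K + 1))%N.
have expb : forall i, (N i)%:R <= expR (e * L).
  move=> i; have [_ Np lt] := Ni i.
  rewrite -[X in X <= _]lnK; last by rewrite posrE ltr0n.
  by rewrite ler_expR ltW.
have sumb : ((C * \sum_i N i)%N%:R : R) <= (C * m)%N%:R * expR (e * L).
  rewrite natrM natr_sum (natrM _ C m) -mulrA ler_wpM2l //.
  apply: le_trans (_ : \sum_(i < m) expR (e * L) <= _).
    by apply: ler_sum => i _; exact: expb.
  by rewrite sumr_const card_ord mulr_natl.
have Cm0 : (0 < (C * m)%N%:R :> R) by rewrite ltr0n /C; lia.
have : ln (Nr%:R) <= ln ((C * m)%N%:R * expR (e * L)).
  rewrite ler_ln ?posrE ?ltr0n // ?mulr_gt0 ?expR_gt0 //.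
  apply: le_trans sumb; rewrite ler_nat; exact: Nrle.
rewrite lnM ?posrE // ?expR_gt0 // expRK.
move: hX; rewrite -/L /C => hX.
rewrite mulrDl; lra.
Qed.

End Comb.

Theorem mainTheorem8 (R : realType) (m : nat) (f : 'I_m -> R -> R)
  (hm : (0 < m)%N)
  (hf : forall i, {within `[0, 1]%classic, continuous (f i)})
  (p : mpoly.mpoly m R) :
  (upper_box_dim (graph (fun x => mpoly.meval (fun i => f i x) p))
   <= \big[Order.max/-oo]_(i < m) upper_box_dim (graph (f i)))%E.
Proof.
set r := fun x => mpoly.meval (fun i => f i x) p.
have hB : forall i, exists Bi : R, 0 <= Bi /\ forall x, 0 <= x <= 1 -> `|f i x| <= Bi.
  move=> i; have [c1 _ hmax] := EVT_max ler01 (hf i).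
  have [c2 _ hmin] := EVT_min ler01 (hf i).
  exists (`|f i c1| + `|f i c2|); split; first by rewrite addr_ge0.
  move=> x hx; have x01 : x \in `[0, 1]%R by rewrite in_itv.
  have := hmax x x01; have := hmin x x01.
  have := ler_norm (f i c1); have := ler_norm (- f i c2); rewrite normrN.
  have := normr_ge0 (f i c1); have := normr_ge0 (f i c2).
  by rewrite ler_norml => *; apply/andP; split; lra.
have [Bf HBf] := choice hB.
pose B := \sum_i Bf i.
have B0 : 0 <= B by apply: sumr_ge0 => i _; case: (HBf i).
have fB : forall i x, 0 <= x <= 1 -> `|f i x| <= B.
  move=> i x hx; apply: le_trans (proj2 (HBf i) x hx) _.
  rewrite /B (bigD1 i) //= lerDl; apply: sumr_ge0 => j _; by case: (HBf j).
have [K [K0 HK]] := @lip_meval R m B B0 p.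
pose Kn := (Num.truncn K).+1.
have KKn : K <= Kn%:R by apply: ltW; exact: truncnS_gt.
have hK : forall x x', 0 <= x <= 1 -> 0 <= x' <= 1 ->
     `|r x - r x'| <= Kn%:R * \sum_i `|f i x - f i x'|.
  move=> x x' hx hx'.
  apply: le_trans (HK (fun i => f i x) (fun i => f i x') _ _) _.
  - by move=> i; exact: fB.
  - by move=> i; exact: fB.
  by apply: ler_wpM2r => //; apply: sumr_ge0.
set M := (\big[Order.max/-oo]_(i < m) _)%E.
have LiM : forall i, (upper_box_dim (graph (f i)) <= M)%E by move=> i; exact: le_bigmax.
have core : forall e η : R, 0 < η -> (forall i, (upper_box_dim (graph (f i)) < e%:E)%E) ->
    (upper_box_dim (graph r) <= (e + η)%:E)%E.
  move=> e η η0 hL.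
  have hV : forall i, exists V, (0:R)^'+ V /\ (ereal_sup (box_ratio (graph (f i)) @` V) < e%:E)%E.
    move=> i; have := hL i; rewrite /upper_box_dim /limf_esup.
    by move=> /ereal_inf_lt [_ [V FV <-] lt]; exists V.
  have [V HV] := choice hV.
  pose X := ln ((7 * (4 * Kn + 1) * m)%N%:R : R) / η.
  pose W := fun d : R => (((0 < d) /\ (d < 1)) /\ d < expR (- X)) /\ (forall i, V i d).
  have FW : (0:R)^'+ W.
    apply: filterI; last exact: (@filter_forall R _ V _ _ (fun i => proj1 (HV i))).
    apply: filterI; last exact: nbhs_right_lt (expR_gt0 _).
    apply: filterI; first exact: nbhs_right_gt.
    exact: nbhs_right_lt ltr01.
  rewrite /upper_box_dim /limf_esup.
  apply: (@le_trans _ _ (ereal_sup (box_ratio (graph r) @` W))).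
    by apply: ereal_inf_lbound; exists W.
  apply/ereal_supP => _ [d [[[d0 d1] d2] dV] <-].
  apply: (@ratio_bound R m hm f hf r Kn hK e η d d0 d1 η0).
    have : ln d < - X by rewrite -(expRK (- X)) ltr_ln ?posrE ?expR_gt0.
    have -> : ln ((7 * (4 * Kn + 1) * m)%N%:R : R) = η * X by rewrite /X; field; rewrite gt_eqF.
    move=> h; apply: ler_wpM2l; first exact: ltW.
    by move: h; rewrite ltrNr => h; apply: ltW.
  move=> i; apply: le_lt_trans (proj2 (HV i)).
  by apply: ereal_sup_ubound; exists d => //; apply: dV.
case hM : M => [r0| |].
- apply/lee_addgt0Pr => η η0.
  have := core (r0 + η / 2) (η / 2) _ _.
  rewrite -EFinD -addrA -splitr; apply => //; first by rewrite divr_gt0.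
  move=> i; apply: le_lt_trans (LiM i) _; rewrite hM lte_fin; lra.
- by rewrite leey.
- have lt : forall e : R, forall i, (upper_box_dim (graph (f i)) < e%:E)%E.
    by move=> e i; apply: le_lt_trans (LiM i) _; rewrite hM ltNyr.
  case hU : (upper_box_dim (graph r)) => [u| |] //.
    have := core (u - 2) 1 ltr01 (lt _); rewrite hU lee_fin => h; exfalso; lra.
  by have := core 0 1 ltr01 (lt _); rewrite hU leye_eq.
Qed.
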